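(* Let $(F,<_F)$ and $(G,<_G)$ be ordered groups and let $\prec$ be the ordering of $F*G$ described in the context. Then $\prec$ restricts to $<_F$ on $F$ and to $<_G$ on $G$, and for any automorphisms $\phi\colon F\to F$ and $\psi\colon G\to G$ preserving $<_F$ and $<_G$ respectively, the automorphism $\phi*\psi\colon F*G\to F*G$ preserves $\prec$.
   Context: An ordered group is a group with a strict total order invariant under left and right multiplication. Construction of $\prec$ on $F*G$: order $F\times G$ lexicographically ($(f,g)<(f',g')$ iff $f<_Ff'$, or $f=f'$ and $g<_Gg'$). In $R=\mathbb{Z}(F\times G)$ call a nonzero element positive if the coefficient of its largest group element is a positive integer. Let $\rho\colon F*G\to M_2(R[t])$ be the homomorphism with $\rho(f)=\begin{pmatrix} f&(f-1)t\\0&1\end{pmatrix}$ for $f\in F$, $\rho(g)=\begin{pmatrix}1&0\\(g-1)t&g\end{pmatrix}$ for $g\in G$; it is injective. Order the matrix positions as $(1,1)$, $(2,2)$, then the two off-diagonal positions in a fixed order. A nonzero $M=\sum_i M_it^i\in M_2(R[t])$ ($M_i\in M_2(R)$) is positive if for the least $n$ with $M_n\ne0$, the first nonzero entry of $M_n$ is positive in $R$. Set $x\prec y$ iff $\rho(y)-\rho(x)$ is positive. *)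

(* Defs.v *)
From HB Require Import structures.
From mathcomp Require Import all_boot all_order all_algebra.
From mathcomp Require Import monoid.

Set Implicit Arguments.
Unset Strict Implicit.
Unset Printing Implicit Defensive.

Import GRing.Theory Num.Theory.

Local Open Scope ring_scope.

Section Defs.

Definition is_group_order (F : groupType) (lt : F -> F -> Prop) : Prop :=
  [/\ (forall x, ~ lt x x),
      (forall x y z, lt x y -> lt y z -> lt x z),
      (forall x y, x <> y -> lt x y \/ lt y x),
      (forall x y z, lt x y -> lt (z * x)%g (z * y)%g) &
      (forall x y z, lt x y -> lt (x * z)%g (y * z)%g)].

Definition is_group_aut (F : groupType) (phi : F -> F) : Prop :=
  {morph phi : x y / (x * y)%g} /\ bijective phi.

(* The free product F * G, as the set of reduced words: finite sequences
   of nontrivial letters alternating between F and G.                 *)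
Variables F G : groupType.

Definition letter := (F + G)%type.

Definition letter_nontriv (l : letter) : bool :=
  match l with inl f => f != 1%g | inr g => g != 1%g end.

Definition letter_side (l : letter) : bool :=
  match l with inl _ => true | inr _ => false end.

Definition reduced (w : seq letter) : bool :=
  all letter_nontriv w && sorted (fun a b => letter_side a != letter_side b) w.

Definition free_prod := {w : seq letter | reduced w}.

Definition inF (f : F) : free_prod :=
  insubd (exist _ [::] isT : free_prod) [:: inl f].
Definition inG (g : G) : free_prod :=
  insubd (exist _ [::] isT : free_prod) [:: inr g].

(* phi * psi : F*G -> F*G acts letterwise on reduced words (for
   automorphisms phi, psi the image word is again reduced, so the
   default branch of insubd is never used). *)
Definition letter_map (phi : F -> F) (psi : G -> G) (l : letter) : letter :=
  match l with inl f => inl (phi f) | inr g => inr (psi g) end.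
Definition free_prod_map (phi : F -> F) (psi : G -> G) (w : free_prod)
  : free_prod := insubd w (map (letter_map phi psi) (val w)).

(* The ring R[t] with R = Z(F x G), elements given as formal finite sums
   of monomials  c * (f,g) * t^n  (c : int).                           *)
Definition monom := (int * ((F * G) * nat))%type.
Definition Rpoly := seq monom.

Definition coef (p : Rpoly) (k : F * G) (n : nat) : int :=
  \sum_(m <- p | (m.2.1 == k) && (m.2.2 == n)) m.1.

Definition padd (p q : Rpoly) : Rpoly := p ++ q.
Definition popp (p : Rpoly) : Rpoly := [seq (- m.1, m.2) | m <- p].
Definition pmul (p q : Rpoly) : Rpoly :=
  [seq (a.1 * b.1, ((a.2.1 * b.2.1)%g, (a.2.2 + b.2.2)%N)) | a <- p, b <- q].
Definition pmon (c : int) (k : F * G) (n : nat) : Rpoly := [:: (c, (k, n))].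

Record mx2 := Mx2 { m11 : Rpoly; m12 : Rpoly; m21 : Rpoly; m22 : Rpoly }.

Definition mx2_mul (A B : mx2) : mx2 :=
  Mx2 (padd (pmul (m11 A) (m11 B)) (pmul (m12 A) (m21 B)))
      (padd (pmul (m11 A) (m12 B)) (pmul (m12 A) (m22 B)))
      (padd (pmul (m21 A) (m11 B)) (pmul (m22 A) (m21 B)))
      (padd (pmul (m21 A) (m12 B)) (pmul (m22 A) (m22 B))).
Definition mx2_sub (A B : mx2) : mx2 :=
  Mx2 (padd (m11 A) (popp (m11 B))) (padd (m12 A) (popp (m12 B)))
      (padd (m21 A) (popp (m21 B))) (padd (m22 A) (popp (m22 B))).
Definition mx2_one : mx2 := Mx2 (pmon 1 (1%g, 1%g) 0) [::] [::] (pmon 1 (1%g, 1%g) 0).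

(* rho(f) = [[f, (f-1)t], [0, 1]],   rho(g) = [[1, 0], [(g-1)t, g]] *)
Definition rho_letter (l : letter) : mx2 :=
  match l with
  | inl f => Mx2 (pmon 1 (f, 1%g) 0)
                 (pmon 1 (f, 1%g) 1 ++ pmon (-1) (1%g, 1%g) 1)
                 [::] (pmon 1 (1%g, 1%g) 0)
  | inr g => Mx2 (pmon 1 (1%g, 1%g) 0) [::]
                 (pmon 1 (1%g, g) 1 ++ pmon (-1) (1%g, 1%g) 1)
                 (pmon 1 (1%g, g) 0)
  end.

Definition rho (w : free_prod) : mx2 :=
  foldr (fun l M => mx2_mul (rho_letter l) M) mx2_one (val w).

Variables (ltF : F -> F -> Prop) (ltG : G -> G -> Prop).

Definition lex_lt (k k' : F * G) : Prop :=
  ltF k.1 k'.1 \/ (k.1 = k'.1 /\ ltG k.2 k'.2).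

Definition R_pos (c : F * G -> int) : Prop :=
  exists k, 0 < c k /\ forall k', lex_lt k k' -> c k' = 0.

Definition entries (o12 : bool) (M : mx2) : seq Rpoly :=
  if o12 then [:: m11 M; m22 M; m12 M; m21 M]
  else [:: m11 M; m22 M; m21 M; m12 M].

Definition mx2_pos (o12 : bool) (M : mx2) : Prop :=
  let E := entries o12 M in
  exists n : nat,
    (forall m, (m < n)%N -> forall p k, p \in E -> coef p k m = 0) /\
    exists i : nat, (i < size E)%N /\
      (forall j, (j < i)%N -> forall k, coef (nth [::] E j) k n = 0) /\
      R_pos (fun k => coef (nth [::] E i) k n).

Definition prec (o12 : bool) (x y : free_prod) : Prop :=
  mx2_pos o12 (mx2_sub (rho y) (rho x)).

End Defs.

(* Main.v *)
Require Import Defs.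
From HB Require Import structures.
From mathcomp Require Import all_boot all_order all_algebra.
From mathcomp Require Import monoid.
Set Implicit Arguments. Unset Strict Implicit. Unset Printing Implicit Defensive.
Import Order.TTheory GRing.Theory Num.Theory.
Local Open Scope ring_scope.
Section S.
Variables F G : groupType.
Lemma mulP (a b : F * G) : (a * b)%g = ((a.1 * b.1)%g, (a.2 * b.2)%g).
Proof. by case: a; case: b. Qed.
Lemma oneP : (1%g : F * G) = (1%g, 1%g).
Proof. by []. Qed.
Lemma coef_cat (p q : Rpoly F G) k n : coef (p ++ q) k n = coef p k n + coef q k n.
Proof. by rewrite /coef big_cat. Qed.
Lemma coef_nil k n : coef ([::] : Rpoly F G) k n = 0.
Proof. by rewrite /coef big_nil. Qed.
Lemma coef_cons (m : monom F G) p k n : coef (m :: p) k n =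
  ((m.2.1 == k) && (m.2.2 == n))%:Z * m.1 + coef p k n.
Proof. by rewrite /coef big_cons; case: ifP => _; rewrite ?mul1r ?mul0r ?add0r. Qed.
Lemma coef_popp (p : Rpoly F G) k n : coef (popp p) k n = - coef p k n.
Proof. by rewrite /coef /popp big_map sumrN. Qed.
Lemma coef_sub0 (p : Rpoly F G) k n : coef (padd p (popp p)) k n = 0.
Proof. by rewrite /padd coef_cat coef_popp subrr. Qed.
Lemma pmul0 (p : Rpoly F G) : pmul p [::] = [::].
Proof. by elim: p. Qed.
Lemma coef_cons' c k0 n0 (p : Rpoly F G) k n : coef ((c,(k0,n0)) :: p) k n =
  ((k == k0) && (n == n0))%:Z * c + coef p k n.
Proof. by rewrite coef_cons /= (eq_sym k0) (eq_sym n0). Qed.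
Ltac csimp := rewrite /pmon /= ?pmul0 ?coef_cat ?coef_cons' ?coef_nil ?mulP /= ?mulg1 ?mul1g ?addn0 ?add0n ?mulr1 ?mul1r ?addr0 ?add0r.
Lemma rhoF_11 (f : F) k n : coef (m11 (rho (inF G f))) k n = ((k == (f,1%g)) && (n == 0%N))%:Z.
Proof. rewrite /rho /inF val_insubd /reduced /=; by case: eqP => [->|nf] /=; csimp. Qed.
Lemma rhoG_11 (g : G) k n : coef (m11 (rho (inG F g))) k n = ((k == (1%g,1%g)) && (n == 0%N))%:Z.
Proof. rewrite /rho /inG val_insubd /reduced /=; by case: eqP => [->|nf] /=; csimp. Qed.
Lemma rhoG_22 (g : G) k n : coef (m22 (rho (inG F g))) k n = ((k == (1%g,g)) && (n == 0%N))%:Z.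
Proof. rewrite /rho /inG val_insubd /reduced /=; by case: eqP => [->|nf] /=; csimp. Qed.

Lemma coef_padd (p q : Rpoly F G) k n : coef (padd p (popp q)) k n = coef p k n - coef q k n.
Proof. by rewrite /padd coef_cat coef_popp. Qed.

Section Ord.
Variables (ltF : F -> F -> Prop) (ltG : G -> G -> Prop).
Hypothesis oF : is_group_order ltF.
Hypothesis oG : is_group_order ltG.

Lemma lex_irr x : ~ lex_lt ltF ltG x x.
Proof.
case: oF => irF _ _ _ _; case: oG => irG _ _ _ _.
by case=> [/irF|[_ /irG]].
Qed.

Lemma R_pos_ext (c d : F * G -> int) : (forall k, c k = d k) -> R_pos ltF ltG c -> R_pos ltF ltG d.
Proof. move=> e [k [h1 h2]]; exists k; split; first by rewrite -e. by move=> k' /h2; rewrite e. Qed.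

Lemma R_pos0 (c : F * G -> int) : (forall k, c k = 0) -> ~ R_pos ltF ltG c.
Proof. by move=> e [k [h _]]; move: h; rewrite e ltxx. Qed.

Lemma R_pos_diff (a b : F * G) : a != b ->
  (R_pos ltF ltG (fun k => (k == a)%:Z - (k == b)%:Z) <-> ~ lex_lt ltF ltG a b).
Proof.
move=> nab; split.
  move=> [k [hk H]] hab.
  case: (eqVneq k a) => [ka|ka].
    subst k; move: (H b hab) => /eqP.
    by rewrite eqxx (eq_sym b) (negbTE nab).
  move: hk; rewrite (negbTE ka) sub0r oppr_gt0.
  by case: (k == b).
move=> nl; exists a; rewrite eqxx (negbTE nab) subr0; split => // k' hk'.
have ka : k' != a by apply/eqP => e; subst k'; exact: (lex_irr hk').
have kb : k' != b by apply/eqP => e; subst k'.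
by rewrite (negbTE ka) (negbTE kb) subrr.
Qed.

Lemma size_entries o (M : mx2 F G) : size (entries o M) = 4.
Proof. by case: o. Qed.
Lemma nth0_entries o (M : mx2 F G) : nth [::] (entries o M) 0 = m11 M.
Proof. by case: o. Qed.
Lemma nth1_entries o (M : mx2 F G) : nth [::] (entries o M) 1 = m22 M.
Proof. by case: o. Qed.
Lemma m11_in o (M : mx2 F G) : m11 M \in entries o M.
Proof. by case: o; rewrite inE eqxx. Qed.
Lemma m22_in o (M : mx2 F G) : m22 M \in entries o M.
Proof. by case: o; rewrite !inE eqxx ?orbT. Qed.
Lemma entries_map o (M : mx2 F G) (h : Rpoly F G -> Rpoly F G) :
  entries o (Mx2 (h (m11 M)) (h (m12 M)) (h (m21 M)) (h (m22 M))) = map h (entries o M).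
Proof. by case: o. Qed.

Lemma prec_refl o x : ~ prec ltF ltG o x x.
Proof.
move=> [n [_ [i [hi [_ hp]]]]].
apply: (R_pos0 _ hp) => k.
move: (mem_nth [::] hi); move: (nth _ _ _) => p.
by clear hp hi; case: o; rewrite !inE => /or4P [] /eqP ->; rewrite coef_sub0.
Qed.

Lemma partF o (f f' : F) : prec ltF ltG o (inF G f) (inF G f') <-> ltF f f'.
Proof.
case: oF => irF trF toF _ _.
case: (eqVneq f f') => [<-|nf].
  by split => [/prec_refl|/irF].
rewrite /prec; set M := mx2_sub _ _.
have h11 k n : coef (m11 M) k n = ((k == (f',1%g)) && (n == 0%N))%:Z - ((k == (f,1%g)) && (n == 0%N))%:Z.
  by rewrite /M /= coef_padd !rhoF_11.
have nab : (f', 1%g) != (f, 1%g) :> F * G.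
  by apply/eqP => -[e]; move: nf; rewrite e eqxx.
split.
  move=> [n [Hlt [i [Hi [Hj Hpos]]]]].
  case: n Hlt Hj Hpos => [|n] Hlt Hj Hpos; last first.
    move: (Hlt 0%N isT _ (f', 1%g) (m11_in o M)); rewrite h11 eqxx (negbTE nab) /=.
    by rewrite subr0.
  case: i Hi Hj Hpos => [|i] Hi Hj Hpos; last first.
    move: (Hj 0%N isT (f', 1%g)); rewrite nth0_entries h11 eqxx (negbTE nab) /=.
    by rewrite subr0.
  move: Hpos; rewrite nth0_entries => Hpos.
  have : R_pos ltF ltG (fun k => (k == (f',1%g))%:Z - (k == (f,1%g))%:Z).
    by apply: R_pos_ext Hpos => k; rewrite h11 /= !andbT.
  move/(R_pos_diff nab) => nl.
  case: (toF f f' (elimN eqP nf)) => [//|h]; exfalso; apply: nl; by left.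
move=> lt; exists 0%N; split => [m //|]; exists 0%N; rewrite size_entries; split => //; split => [j //|].
rewrite nth0_entries.
apply: (R_pos_ext (c := fun k => (k == (f',1%g))%:Z - (k == (f,1%g))%:Z)) => [k|].
  by rewrite h11 /= !andbT.
apply/R_pos_diff => // -[h|[e _]].
  exact: irF (trF _ _ _ h lt).
by move: nf; rewrite /= in e; rewrite e eqxx.
Qed.
Lemma partG o (g g' : G) : prec ltF ltG o (inG F g) (inG F g') <-> ltG g g'.
Proof.
case: oF => irF _ _ _ _.
case: oG => irG trG toG _ _.
case: (eqVneq g g') => [<-|ng].
  by split => [/prec_refl|/irG].
rewrite /prec; set M := mx2_sub _ _.
have h11 k n : coef (m11 M) k n = 0.
  by rewrite /M /= coef_padd !rhoG_11 subrr.
have h22 k n : coef (m22 M) k n = ((k == (1%g,g')) && (n == 0%N))%:Z - ((k == (1%g,g)) && (n == 0%N))%:Z.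
  by rewrite /M /= coef_padd !rhoG_22.
have nab : (1%g, g') != (1%g, g) :> F * G.
  by apply/eqP => -[e]; move: ng; rewrite e eqxx.
split.
  move=> [n [Hlt [i [Hi [Hj Hpos]]]]].
  case: n Hlt Hj Hpos => [|n] Hlt Hj Hpos; last first.
    move: (Hlt 0%N isT _ (1%g, g') (m22_in o M)); rewrite h22 eqxx (negbTE nab) /=.
    by rewrite subr0.
  case: i Hi Hj Hpos => [|[|i]] Hi Hj Hpos.
  - by exfalso; apply: (R_pos0 _ Hpos) => k; rewrite nth0_entries h11.
  - move: Hpos; rewrite nth1_entries => Hpos.
    have : R_pos ltF ltG (fun k => (k == (1%g,g'))%:Z - (k == (1%g,g))%:Z).
      by apply: R_pos_ext Hpos => k; rewrite h22 /= !andbT.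
    move/(R_pos_diff nab) => nl.
    case: (toG g g' (elimN eqP ng)) => [//|h]; exfalso; apply: nl; by right.
  - move: (Hj 1%N isT (1%g, g')); rewrite nth1_entries h22 eqxx (negbTE nab) /=.
    by rewrite subr0.
move=> lt; exists 0%N; split => [m //|]; exists 1%N; rewrite size_entries; split => //; split.
  by case=> // _ k; rewrite nth0_entries h11.
rewrite nth1_entries.
apply: (R_pos_ext (c := fun k => (k == (1%g,g'))%:Z - (k == (1%g,g))%:Z)) => [k|].
  by rewrite h22 /= !andbT.
apply/R_pos_diff => // -[h|[_ h]].
  exact: irF h.
exact: irG (trG _ _ _ h lt).
Qed.
Section Map.
Variables (phi : F -> F) (psi : G -> G).
Hypothesis aphi : is_group_aut phi.
Hypothesis apsi : is_group_aut psi.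
Hypothesis mphi : forall f f', ltF f f' -> ltF (phi f) (phi f').
Hypothesis mpsi : forall g g', ltG g g' -> ltG (psi g) (psi g').

Definition Phi (k : F * G) : F * G := (phi k.1, psi k.2).
Definition pmap (p : Rpoly F G) : Rpoly F G := [seq (m.1, (Phi m.2.1, m.2.2)) | m <- p].
Definition mmap (M : mx2 F G) : mx2 F G :=
  Mx2 (pmap (m11 M)) (pmap (m12 M)) (pmap (m21 M)) (pmap (m22 M)).

Lemma morph1 (H : groupType) (h : H -> H) : {morph h : x y / (x * y)%g} -> h 1%g = 1%g.
Proof.
move=> hM; apply: (@mulgI _ (h 1%g)); by rewrite -hM !mulg1.
Qed.
Lemma phi1 : phi 1%g = 1%g. Proof. by case: aphi => /morph1. Qed.
Lemma psi1 : psi 1%g = 1%g. Proof. by case: apsi => /morph1. Qed.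
Lemma Phi_mul a b : Phi (a * b)%g = (Phi a * Phi b)%g.
Proof.
case: aphi => hM _; case: apsi => gM _.
by rewrite /Phi !mulP /= hM gM.
Qed.
Lemma phi_inj : injective phi. Proof. by case: aphi => _ /bij_inj. Qed.
Lemma psi_inj : injective psi. Proof. by case: apsi => _ /bij_inj. Qed.
Lemma Phi_inj : injective Phi.
Proof. by case=> a1 a2 [b1 b2] [/phi_inj -> /psi_inj ->]. Qed.
Lemma Phi_surj k : exists k0, k = Phi k0.
Proof.
case: aphi => _ [phi' _ c1]; case: apsi => _ [psi' _ c2].
by exists (phi' k.1, psi' k.2); rewrite /Phi /= c1 c2; case: k.
Qed.

Lemma pmap_pmul p q : pmap (pmul p q) = pmul (pmap p) (pmap q).
Proof.
elim: p => //= a p IH.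
have pc (a0 : monom F G) p0 q0 : pmul (a0 :: p0) q0 =
  [seq (a0.1 * b.1, ((a0.2.1 * b.2.1)%g, (a0.2.2 + b.2.2)%N)) | b <- q0] ++ pmul p0 q0 by [].
rewrite !pc {1}/pmap map_cat -/(pmap (pmul p q)) IH; congr (_ ++ _).
rewrite /pmap -!map_comp.
by apply: eq_map => b /=; rewrite Phi_mul.
Qed.
Lemma pmap_cat p q : pmap (p ++ q) = pmap p ++ pmap q.
Proof. exact: map_cat. Qed.
Lemma pmap_popp p : pmap (popp p) = popp (pmap p).
Proof. by rewrite /pmap /popp -!map_comp. Qed.
Lemma mmap_mul A B : mmap (mx2_mul A B) = mx2_mul (mmap A) (mmap B).
Proof. by rewrite /mmap /mx2_mul /padd /= !pmap_cat !pmap_pmul. Qed.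
Lemma mmap_sub A B : mmap (mx2_sub A B) = mx2_sub (mmap A) (mmap B).
Proof. by rewrite /mmap /mx2_sub /padd /= !pmap_cat !pmap_popp. Qed.
Lemma mmap_one : mmap (mx2_one F G) = mx2_one F G.
Proof. by rewrite /mmap /= /Phi /= phi1 psi1. Qed.
Lemma rho_letter_map l : rho_letter (letter_map phi psi l) = mmap (rho_letter l).
Proof. by case: l => x; rewrite /mmap /= /Phi /= phi1 psi1. Qed.

Lemma val_map x : val (free_prod_map phi psi x) = map (letter_map phi psi) (val x).
Proof.
rewrite /free_prod_map val_insubd; case: x => w /= /andP [h1 h2].
have -> : reduced (map (letter_map phi psi) w); last by [].
apply/andP; split.
  rewrite all_map; apply: sub_all h1 => -[a|b] /=.
    by apply: contra_neq => e; apply: phi_inj; rewrite e phi1.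
  by apply: contra_neq => e; apply: psi_inj; rewrite e psi1.
rewrite sorted_map; apply: sub_sorted h2 => -[a|a] [b|b] //.
Qed.

Lemma rho_map x : rho (free_prod_map phi psi x) = mmap (rho x).
Proof.
rewrite /rho val_map; elim: (val x) => [|l s IH] /=; first by rewrite mmap_one.
by rewrite IH rho_letter_map mmap_mul.
Qed.

Lemma coef_pmap p k n : coef (pmap p) (Phi k) n = coef p k n.
Proof. by rewrite /coef big_map; apply: eq_bigl => m /=; rewrite (inj_eq Phi_inj). Qed.

Lemma lex_reflect a b : lex_lt ltF ltG (Phi a) (Phi b) -> lex_lt ltF ltG a b.
Proof.
case: oF => irF trF toF _ _; case: oG => irG trG toG _ _.
case: a => a1 a2; case: b => b1 b2; rewrite /lex_lt /Phi /=.
have rF x y : ltF (phi x) (phi y) -> ltF x y.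
  move=> h; case: (eqVneq x y) => [e|ne]; first by subst; case: (irF _ h).
  case: (toF _ _ (elimN eqP ne)) => // h'.
  by case: (irF _ (trF _ _ _ h (mphi h'))).
have rG x y : ltG (psi x) (psi y) -> ltG x y.
  move=> h; case: (eqVneq x y) => [e|ne]; first by subst; case: (irG _ h).
  case: (toG _ _ (elimN eqP ne)) => // h'.
  by case: (irG _ (trG _ _ _ h (mpsi h'))).
case=> [/rF h|[/phi_inj e /rG h]]; [by left | by right].
Qed.

Lemma mx2_pos_map o M : mx2_pos ltF ltG o M -> mx2_pos ltF ltG o (mmap M).
Proof.
move=> [n [Hlt [i [Hi [Hj Hpos]]]]].
rewrite /mx2_pos /mmap entries_map.
exists n; split.
  move=> m mn p k pin; case/mapP: pin => p0 p0in ->; case: (Phi_surj k) => k0 ->.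
  by rewrite coef_pmap; apply: Hlt.
exists i; rewrite size_map; split => //; split.
  move=> j ji k; case: (Phi_surj k) => k0 ->.
  rewrite (nth_map [::]) ?coef_pmap ?Hj //.
  exact: ltn_trans ji Hi.
rewrite (nth_map [::]) //.
case: Hpos => k [hk H]; exists (Phi k); rewrite coef_pmap; split => // k'.
case: (Phi_surj k') => k0 -> /lex_reflect /H.
by rewrite coef_pmap.
Qed.

Lemma part3 o x y : prec ltF ltG o x y ->
  prec ltF ltG o (free_prod_map phi psi x) (free_prod_map phi psi y).
Proof. by rewrite /prec !rho_map -mmap_sub; apply: mx2_pos_map. Qed.
End Map.
End Ord.
End S.

Theorem corollary4p1 (F G : groupType)
    (ltF : F -> F -> Prop) (ltG : G -> G -> Prop) (o12 : bool) :
  is_group_order ltF -> is_group_order ltG ->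
  (forall f f' : F, prec ltF ltG o12 (inF G f) (inF G f') <-> ltF f f') /\
  (forall g g' : G, prec ltF ltG o12 (inG F g) (inG F g') <-> ltG g g') /\
  (forall (phi : F -> F) (psi : G -> G),
     is_group_aut phi -> is_group_aut psi ->
     (forall f f', ltF f f' -> ltF (phi f) (phi f')) ->
     (forall g g', ltG g g' -> ltG (psi g) (psi g')) ->
     forall x y : free_prod F G,
       prec ltF ltG o12 x y ->
       prec ltF ltG o12 (free_prod_map phi psi x) (free_prod_map phi psi y)).
Proof.
move=> oF oG; split; first by move=> f f'; exact: partF.
split; first by move=> g g'; exact: partG.
move=> phi psi aphi apsi mphi mpsi x y; exact: part3.
Qed.
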